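(* Under the standing assumptions below, every point $u\in\mathcal P_1$ is both an R-limit and an L-limit of $\mathcal P_1$.
   Context: Fix $\rho_1,\rho_2,\rho_3\in(0,1)$ with $\rho_1+\rho_2+\rho_3>1$ and $\rho_i+\rho_j\le1$ for all $i\ne j$; $\mu_i=1$, $\theta:=\rho_1+\rho_2+\rho_3-1$. $A_i^0:=\{y\in\mathbb R^3: y_1+y_2+y_3=1, y_i=0, y_l\ge0\}$, $A^0:=\bigcup_iA_i^0$; for $z\in A^0\setminus A_j^0$, $f_j(z):=\sum_{i\neq j}\frac{(1-\rho_j)z_i+\rho_i z_j}{(1-\rho_j)+\theta z_j}e_i$. For $(\hat i,\hat j,\hat k)$ equal to $(1,2,3)$ or a cyclic permutation, $(1-x)e_{\hat j}+xe_{\hat k}\in A^0_{\hat i}$ is written $(x,\hat i)$, $\pi((x,\hat i)):=x$. Decision points $d_1,d_2,d_3\in(0,1)$ (identified with $(d_{\hat i},\hat i)$); switching rule $\mathfrak R((x,\hat i))=\hat j$ if $x<d_{\hat i}$, $\hat k$ if $x>d_{\hat i}$, both allowed if $x=d_{\hat i}$; $\varphi(z):=f_{\mathfrak R(z)}(z)$. A trajectory is $(z(t))$ with $z(t+1)\in\varphi(z(t))$; $z$ is a pre-image of $z'$ if some trajectory from $z$ has $z(t)=z'$ for some $t\ge1$. Standing assumption: $d_1$ has infinitely many distinct pre-images, while $d_2$ and $d_3$ have only finitely many. $\mathcal P_1$ is the set consisting of $d_1$ and all its pre-images. A point $u\in A^0_{\hat i}$ is an R-limit (resp. L-limit) of $\mathcal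 P_1$ if there is a sequence $u_n\in\mathcal P_1\cap A^0_{\hat i}$ with $\pi(u_n)$ strictly decreasing (resp. strictly increasing) to $\pi(u)$. *)

(* Defs.v *)
From Stdlib Require Import Reals Lra List.
Open Scope R_scope.

Inductive idx : Type := I1 | I2 | I3.

Definition idx_eq_dec (a b : idx) : {a = b} + {a <> b}.
Proof. decide equality. Defined.

(* Cyclic successor: (i^, j^, k^) = (i, nxt i, nxt (nxt i)) ranges over
   (1,2,3), (2,3,1), (3,1,2). *)
Definition nxt (i : idx) : idx :=
  match i with I1 => I2 | I2 => I3 | I3 => I1 end.

Definition vec := idx -> R.

Definition evec (i : idx) : vec := fun l => if idx_eq_dec l i then 1 else 0.

Definition theta (rho : idx -> R) : R := rho I1 + rho I2 + rho I3 - 1.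

Definition inA (i : idx) (y : vec) : Prop :=
  y I1 + y I2 + y I3 = 1 /\ y i = 0 /\ (forall l, 0 <= y l).

Definition inA0 (y : vec) : Prop := exists i, inA i y.

Definition fmap (rho : idx -> R) (j : idx) (z : vec) : vec :=
  fun i => if idx_eq_dec i j then 0
           else ((1 - rho j) * z i + rho i * z j) / ((1 - rho j) + theta rho * z j).

Definition pt (x : R) (i : idx) : vec :=
  fun l => (1 - x) * evec (nxt i) l + x * evec (nxt (nxt i)) l.

Definition piA (i : idx) (u : vec) : R := u (nxt (nxt i)).

(* Switching rule: R(z) may be j (relation form, both allowed at x = d_i). *)
Definition switch (d : idx -> R) (z : vec) (j : idx) : Prop :=
  exists (i : idx) (x : R), inA i z /\ z = pt x i /\
    ((x < d i /\ j = nxt i) \/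
     (x > d i /\ j = nxt (nxt i)) \/
     (x = d i /\ (j = nxt i \/ j = nxt (nxt i)))).

(* z' \in phi(z) = f_{R(z)}(z)  (f_j only defined on A^0 \ A_j^0) *)
Definition step (rho d : idx -> R) (z z' : vec) : Prop :=
  exists j, switch d z j /\ inA0 z /\ ~ inA j z /\ z' = fmap rho j z.

Definition trajectory (rho d : idx -> R) (zt : nat -> vec) : Prop :=
  forall t, step rho d (zt t) (zt (S t)).

Definition preimage (rho d : idx -> R) (z z' : vec) : Prop :=
  exists zt : nat -> vec, trajectory rho d zt /\ zt O = z /\
    exists t, (1 <= t)%nat /\ zt t = z'.

Definition dpt (d : idx -> R) (i : idx) : vec := pt (d i) i.

Definition finite_set (P : vec -> Prop) : Prop :=
  exists l : list vec, forall z, P z -> In z l.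

Definition P1 (rho d : idx -> R) (u : vec) : Prop :=
  u = dpt d I1 \/ preimage rho d u (dpt d I1).

Definition R_limit (rho d : idx -> R) (u : vec) : Prop :=
  exists i, inA i u /\ exists un : nat -> vec,
    (forall n, P1 rho d (un n) /\ inA i (un n)) /\
    (forall n, piA i (un (S n)) < piA i (un n)) /\
    Un_cv (fun n => piA i (un n)) (piA i u).

Definition L_limit (rho d : idx -> R) (u : vec) : Prop :=
  exists i, inA i u /\ exists un : nat -> vec,
    (forall n, P1 rho d (un n) /\ inA i (un n)) /\
    (forall n, piA i (un n) < piA i (un (S n))) /\
    Un_cv (fun n => piA i (un n)) (piA i u).

(* Main.v *)
Require Import Defs.
From Stdlib Require Import Reals Lra Lia List Classical ClassicalEpsilon FunctionalExtensionality ZArith FinFun.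
Open Scope R_scope.

Lemma nxt3 p : nxt (nxt (nxt p)) = p. Proof. destruct p; reflexivity. Qed.
Lemma nxt_inj p q : nxt p = nxt q -> p = q. Proof. destruct p, q; simpl; congruence. Qed.

Lemma pt_p x p : pt x p p = 0. Proof. destruct p; unfold pt, evec; simpl; ring. Qed.
Lemma pt_n x p : pt x p (nxt p) = 1 - x. Proof. destruct p; unfold pt, evec; simpl; ring. Qed.
Lemma pt_nn x p : pt x p (nxt (nxt p)) = x. Proof. destruct p; unfold pt, evec; simpl; ring. Qed.

Lemma pt_inj x p x' p' : 0 < x < 1 -> pt x p = pt x' p' -> p = p' /\ x = x'.
Proof.
  intros Hx E.
  assert (Hp : p = p').
  { assert (E1 := f_equal (fun v => v p') E). simpl in E1. rewrite pt_p in E1.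
    destruct p, p'; unfold pt, evec in E1; simpl in E1; auto; lra. }
  subst p'. split; auto.
  assert (E1 := f_equal (fun v => v (nxt (nxt p))) E). simpl in E1.
  rewrite !pt_nn in E1. auto.
Qed.

Lemma lt_div1 a b : 0 < a -> a < b -> 0 < a / b < 1.
Proof.
  intros. split. apply Rdiv_lt_0_compat; lra.
  apply (Rmult_lt_reg_r b); [lra|]. unfold Rdiv. rewrite Rmult_assoc, Rinv_l by lra. lra.
Qed.

Lemma inj_list {A} (f : nat -> A) (l : list A) :
  (forall a b, f a = f b -> a = b) -> (forall k, In (f k) l) -> False.
Proof.
  intros Hi Hl.
  assert (H := NoDup_incl_length (l := map f (seq 0 (S (length l)))) (l' := l)).
  rewrite length_map, length_seq in H.
  assert (S (length l) <= length l)%nat; [|lia].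
  apply H. apply Injective_map_NoDup. intros a b; apply Hi. apply seq_NoDup.
  intros y Hy. apply in_map_iff in Hy. destruct Hy as [k [Hk _]]. subst. apply Hl.
Qed.

Lemma php n (f : nat -> nat) : (forall i, (i <= n)%nat -> (f i < n)%nat) ->
  exists i j, (i < j <= n)%nat /\ f i = f j.
Proof.
  revert f. induction n; intros f Hf.
  - specialize (Hf 0%nat (le_n 0)). lia.
  - destruct (classic (exists i, (i <= n)%nat /\ f i = f (S n))) as [[i [Hi Ei]]|Hno].
    + exists i, (S n). split; [lia|auto].
    + destruct (IHn (fun i => if (f i <? f (S n))%nat then f i else (f i - 1)%nat)) as [i [j [Hij Eij]]].
      * intros i Hi. pose proof (Hf i ltac:(lia)). pose proof (Hf (S n) ltac:(lia)).
        assert (f i <> f (S n)) by (intro; apply Hno; exists i; auto).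
        destruct (Nat.ltb_spec (f i) (f (S n))); lia.
      * exists i, j. split; [lia|].
        assert (f i <> f (S n)) by (intro; apply Hno; exists i; split; auto; lia).
        assert (f j <> f (S n)) by (intro; apply Hno; exists j; split; auto; lia).
        destruct (Nat.ltb_spec (f i) (f (S n))); destruct (Nat.ltb_spec (f j) (f (S n))); lia.
Qed.

Lemma combine {A} (l : list A) (Q : A -> R -> Prop) :
  (forall a, exists η, 0<η /\ Q a η) -> (forall a η η', Q a η -> 0<η'<=η -> Q a η') ->
  exists η, 0<η /\ forall a, In a l -> Q a η.
Proof.
  intros Hex Hmono. induction l as [|a l IH].
  - exists 1. split; [lra|]. intros a [].
  - destruct IH as [e1 [He1 Q1]]. destruct (Hex a) as [e2 [He2 Q2]].
    exists (Rmin e1 e2). assert (0 < Rmin e1 e2) by (apply Rmin_pos; auto).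
    split; auto. intros b [Hb|Hb].
    + subst. apply Hmono with e2; auto. split; auto. apply Rmin_r.
    + apply Hmono with e1; auto. split; auto. apply Rmin_l.
Qed.

Lemma seq_right (x : R) (Pt : R -> Prop) :
  (forall l, 0 < l -> exists x', x < x' < x + l /\ Pt x') ->
  exists u : nat -> R, (forall n, Pt (u n)) /\ (forall n, u (S n) < u n) /\ Un_cv u x.
Proof.
  intros Hd.
  set (h := fun l => epsilon (inhabits 0) (fun x' => x < x' < x + l /\ Pt x')).
  assert (Hh : forall l, 0 < l -> x < h l < x + l /\ Pt (h l)).
  { intros l Hl. unfold h. apply epsilon_spec. apply Hd; auto. }
  set (u := fix u n := match n with O => h 1 | S m => h (Rmin (u m - x) (/ INR (S (S m)))) end).
  assert (Hu : forall n, x < u n < x + / INR (S n) /\ Pt (u n)).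
  { induction n.
    - simpl u. replace (/ INR 1) with 1 by (simpl; field). apply Hh; lra.
    - destruct IHn as [[A1 A2] A3].
      assert (Hp : 0 < Rmin (u n - x) (/ INR (S (S n)))).
      { apply Rmin_pos. lra. apply Rinv_0_lt_compat. apply lt_0_INR. lia. }
      destruct (Hh _ Hp) as [[B1 B2] B3]. change (u (S n)) with (h (Rmin (u n - x) (/ INR (S (S n))))).
      pose proof (Rmin_r (u n - x) (/ INR (S (S n)))). split; auto. lra. }
  exists u. split; [intro n; apply Hu|]. split.
  - intro n. destruct (Hu n) as [[A1 A2] _].
    assert (Hp : 0 < Rmin (u n - x) (/ INR (S (S n)))).
    { apply Rmin_pos. lra. apply Rinv_0_lt_compat. apply lt_0_INR. lia. }
    destruct (Hh _ Hp) as [[B1 B2] B3]. change (u (S n)) with (h (Rmin (u n - x) (/ INR (S (S n))))).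
    pose proof (Rmin_l (u n - x) (/ INR (S (S n)))). lra.
  - intros eps Heps. destruct (archimed_cor1 eps Heps) as [N [HN1 HN2]].
    exists N. intros n Hn. unfold R_dist. destruct (Hu n) as [[A1 A2] _].
    rewrite Rabs_right by lra.
    assert (/ INR (S n) <= / INR N).
    { apply Rinv_le_contravar. apply lt_0_INR; lia. apply le_INR; lia. }
    lra.
Qed.

Section S.
Variables rho d : idx -> R.
Hypothesis Hrho : forall i, 0 < rho i < 1.
Hypothesis Hsum : rho I1 + rho I2 + rho I3 > 1.
Hypothesis Hpair : forall i j, i <> j -> rho i + rho j <= 1.
Hypothesis Hd : forall i, 0 < d i < 1.

Lemma th_pos : 0 < theta rho. Proof. unfold theta; lra. Qed.
Lemma theta_eq p : theta rho = rho p + rho (nxt p) + rho (nxt (nxt p)) - 1.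
Proof. destruct p; unfold theta; simpl; ring. Qed.

Definition gL p x := rho p * (1-x) / ((1 - rho (nxt p)) + theta rho * (1-x)).
Definition gR p x := ((1 - rho (nxt (nxt p)))*(1-x) + rho (nxt p) * x)
                      / ((1 - rho (nxt (nxt p))) + theta rho * x).

Lemma DL_pos p x : x <= 1 -> 0 < (1 - rho (nxt p)) + theta rho * (1-x).
Proof. intros. pose proof (Hrho (nxt p)). pose proof th_pos.
  assert (0 <= theta rho * (1-x)) by (apply Rmult_le_pos; lra). lra. Qed.
Lemma DR_pos p x : 0 <= x -> 0 < (1 - rho (nxt (nxt p))) + theta rho * x.
Proof. intros. pose proof (Hrho (nxt (nxt p))). pose proof th_pos.
  assert (0 <= theta rho * x) by (apply Rmult_le_pos; lra). lra. Qed.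

Lemma fmapL p x : 0 <= x <= 1 -> fmap rho (nxt p) (pt x p) = pt (gL p x) (nxt p).
Proof.
  intros Hx. pose proof (DL_pos p x ltac:(lra)) as D.
  apply functional_extensionality; intro l.
  unfold gL in *. destruct p, l; unfold fmap, pt, evec, theta in *; simpl in *; field; lra.
Qed.

Lemma fmapR p x : 0 <= x <= 1 -> fmap rho (nxt (nxt p)) (pt x p) = pt (gR p x) (nxt (nxt p)).
Proof.
  intros Hx. pose proof (DR_pos p x ltac:(lra)) as D.
  apply functional_extensionality; intro l.
  unfold gR in *. destruct p, l; unfold fmap, pt, evec, theta in *; simpl in *; field; lra.
Qed.


Lemma le_div1 a b : 0 < a -> a <= b -> 0 < a / b <= 1.
Proof.
  intros. split. apply Rdiv_lt_0_compat; lra.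
  apply (Rmult_le_reg_r b); [lra|]. unfold Rdiv. rewrite Rmult_assoc, Rinv_l by lra. lra.
Qed.

Lemma neq_n p : p <> nxt p. Proof. destruct p; discriminate. Qed.
Lemma neq_nn p : p <> nxt (nxt p). Proof. destruct p; discriminate. Qed.

Lemma gL_contr p a b : 0<=a<=1 -> 0<=b<=1 ->
  exists c, 0<c<=1 /\ gL p a - gL p b = - c * (a - b).
Proof.
  intros Ha Hb. pose proof (DL_pos p a ltac:(lra)) as Da. pose proof (DL_pos p b ltac:(lra)) as Db.
  set (A := 1 - rho (nxt p) + theta rho * (1 - a)) in *.
  set (B := 1 - rho (nxt p) + theta rho * (1 - b)) in *.
  exists (rho p * (1 - rho (nxt p)) / (A * B)). split.
  - apply le_div1. pose proof (Hrho p); pose proof (Hrho (nxt p)).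
    apply Rmult_lt_0_compat; lra.
    pose proof (Hpair p (nxt p) (neq_n p)). pose proof th_pos.
    assert (1 - rho (nxt p) <= A) by (unfold A; assert (0 <= theta rho * (1-a)) by (apply Rmult_le_pos; lra); lra).
    assert (1 - rho (nxt p) <= B) by (unfold B; assert (0 <= theta rho * (1-b)) by (apply Rmult_le_pos; lra); lra).
    pose proof (Hrho p); pose proof (Hrho (nxt p)).
    apply Rle_trans with ((1 - rho (nxt p)) * (1 - rho (nxt p))).
    apply Rmult_le_compat_r; lra. apply Rmult_le_compat; lra.
  - unfold gL. unfold A, B in *. field. split; lra.
Qed.

Lemma gR_contr p a b : 0<=a<=1 -> 0<=b<=1 ->
  exists c, 0<c<=1 /\ gR p a - gR p b = - c * (a - b).
Proof.
  intros Ha Hb. pose proof (DR_pos p a ltac:(lra)) as Da. pose proof (DR_pos p b ltac:(lra)) as Db.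
  set (A := 1 - rho (nxt (nxt p)) + theta rho * a) in *.
  set (B := 1 - rho (nxt (nxt p)) + theta rho * b) in *.
  exists ((1 - rho (nxt (nxt p))) * rho p / (A * B)). split.
  - apply le_div1. pose proof (Hrho p); pose proof (Hrho (nxt (nxt p))).
    apply Rmult_lt_0_compat; lra.
    pose proof (Hpair p (nxt (nxt p)) (neq_nn p)). pose proof th_pos.
    assert (1 - rho (nxt (nxt p)) <= A) by (unfold A; assert (0 <= theta rho * a) by (apply Rmult_le_pos; lra); lra).
    assert (1 - rho (nxt (nxt p)) <= B) by (unfold B; assert (0 <= theta rho * b) by (apply Rmult_le_pos; lra); lra).
    pose proof (Hrho p); pose proof (Hrho (nxt (nxt p))).
    apply Rle_trans with ((1 - rho (nxt (nxt p))) * (1 - rho (nxt (nxt p)))).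
    apply Rmult_le_compat_l; lra. apply Rmult_le_compat; lra.
  - unfold gR. unfold A, B in *. rewrite (theta_eq p) in *. field. split; lra.
Qed.

Lemma gL_in p x : 0 <= x <= d p -> 0 < gL p x < 1.
Proof.
  intros Hx. pose proof (Hd p). unfold gL. apply lt_div1.
  pose proof (Hrho p). apply Rmult_lt_0_compat; lra.
  assert (E : 1 - rho (nxt p) + theta rho * (1 - x) - rho p * (1 - x)
             = (1 - rho (nxt p)) * x + rho (nxt (nxt p)) * (1 - x))
    by (rewrite (theta_eq p); ring).
  pose proof (Hrho (nxt p)); pose proof (Hrho (nxt (nxt p))).
  assert (0 <= (1 - rho (nxt p)) * x) by (apply Rmult_le_pos; lra).
  assert (0 < rho (nxt (nxt p)) * (1 - x)) by (apply Rmult_lt_0_compat; lra). lra.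
Qed.

Lemma gR_in p x : d p <= x <= 1 -> 0 < gR p x < 1.
Proof.
  intros Hx. pose proof (Hd p). unfold gR.
  pose proof (Hrho p); pose proof (Hrho (nxt p)); pose proof (Hrho (nxt (nxt p))).
  apply lt_div1.
  assert (0 <= (1 - rho (nxt (nxt p))) * (1 - x)) by (apply Rmult_le_pos; lra).
  assert (0 < rho (nxt p) * x) by (apply Rmult_lt_0_compat; lra). lra.
  assert (E : 1 - rho (nxt (nxt p)) + theta rho * x - ((1 - rho (nxt (nxt p))) * (1 - x) + rho (nxt p) * x)
             = rho p * x) by (rewrite (theta_eq p); ring).
  assert (0 < rho p * x) by (apply Rmult_lt_0_compat; lra). lra.
Qed.

Lemma gLR_corner p : gL p 0 = gR (nxt (nxt p)) 1.
Proof.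
  pose proof (DL_pos p 0 ltac:(lra)). unfold gL, gR in *. rewrite nxt3.
  replace (nxt (nxt (nxt (nxt p)))) with (nxt p) by (rewrite nxt3; auto).
  rewrite nxt3. replace (1-0) with 1 in * by ring. field. lra.
Qed.

Lemma pt_corner p : pt 0 p = pt 1 (nxt (nxt p)).
Proof. apply functional_extensionality; intro l; destruct p, l; unfold pt, evec; simpl; ring. Qed.


Lemma inA_pt p x : 0<=x<=1 -> inA p (pt x p).
Proof.
  intros Hx. unfold inA. split; [|split].
  - destruct p; unfold pt, evec; simpl; ring.
  - apply pt_p.
  - intro l. destruct p, l; unfold pt, evec; simpl; lra.
Qed.

Lemma inA_bounds i x : inA i (pt x i) -> 0 <= x <= 1.
Proof.
  intros [_ [_ H]]. pose proof (H (nxt i)). pose proof (H (nxt (nxt i))).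
  rewrite pt_n in *. rewrite pt_nn in *. lra.
Qed.

Lemma inA_form i z : inA i z -> z = pt (z (nxt (nxt i))) i.
Proof.
  intros [Hs [H0 Hp]]. apply functional_extensionality; intro l.
  destruct i, l; unfold pt, evec; simpl in *; lra.
Qed.

Lemma step_char z w : step rho d z w -> exists i x, 0 <= x <= 1 /\ z = pt x i /\
  ((x <= d i /\ w = pt (gL i x) (nxt i)) \/ (d i <= x /\ w = pt (gR i x) (nxt (nxt i)))).
Proof.
  intros [j [[i [x [HA [Hz Hc]]]] [_ [_ Hw]]]].
  subst z. pose proof (inA_bounds _ _ HA) as Hx.
  exists i, x. split; auto. split; auto.
  destruct Hc as [[H1 H2]|[[H1 H2]|[H1 [H2|H2]]]]; subst j.
  - left. split; [lra|]. rewrite Hw. apply fmapL; auto.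
  - right. split; [lra|]. rewrite Hw. apply fmapR; auto.
  - left. split; [lra|]. rewrite Hw. apply fmapL; auto.
  - right. split; [lra|]. rewrite Hw. apply fmapR; auto.
Qed.

Lemma step_img z w : step rho d z w -> exists q y, 0<y<1 /\ w = pt y q.
Proof.
  intros H. destruct (step_char z w H) as [i [x [Hx [_ [[H1 H2]|[H1 H2]]]]]].
  - exists (nxt i), (gL i x). split; auto. apply gL_in; lra.
  - exists (nxt (nxt i)), (gR i x). split; auto. apply gR_in; lra.
Qed.

Lemma step_L p x : 0 <= x <= 1 -> x <= d p -> step rho d (pt x p) (pt (gL p x) (nxt p)).
Proof.
  intros Hx Hxd. pose proof (Hd p). exists (nxt p). split; [|split; [|split]].
  - exists p, x. split; [apply inA_pt; auto|]. split; auto.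
    destruct (Rle_lt_or_eq_dec x (d p) Hxd).
    + left; auto.
    + right; right; auto.
  - exists p. apply inA_pt; auto.
  - intros [_ [Hc _]]. rewrite pt_n in Hc. lra.
  - symmetry. apply fmapL; auto.
Qed.

Lemma step_R p x : 0 <= x <= 1 -> d p <= x -> step rho d (pt x p) (pt (gR p x) (nxt (nxt p))).
Proof.
  intros Hx Hxd. pose proof (Hd p). exists (nxt (nxt p)). split; [|split; [|split]].
  - exists p, x. split; [apply inA_pt; auto|]. split; auto.
    destruct (Rle_lt_or_eq_dec (d p) x Hxd).
    + right; left; split; auto.
    + right; right; split; auto.
  - exists p. apply inA_pt; auto.
  - intros [_ [Hc _]]. rewrite pt_nn in Hc. lra.
  - symmetry. apply fmapR; auto.
Qed.

Lemma step_det z w p x : z = pt x p -> 0 < x < 1 -> step rho d z w ->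
  (x < d p -> w = pt (gL p x) (nxt p)) /\ (d p < x -> w = pt (gR p x) (nxt (nxt p))).
Proof.
  intros Hz Hx Hs. destruct (step_char z w Hs) as [i [x0 [Hx0 [Hz0 [[H1 H2]|[H1 H2]]]]]];
  rewrite Hz in Hz0; destruct (pt_inj _ _ _ _ Hx Hz0); subst; split; intros; auto; lra.
Qed.

Lemma succ_ex z : inA0 z -> exists w, step rho d z w /\ inA0 w.
Proof.
  intros [i Hi]. pose proof (inA_form i z Hi) as Hz.
  set (x := z (nxt (nxt i))) in *.
  assert (Hx : 0 <= x <= 1) by (rewrite Hz in Hi; apply inA_bounds with i; auto).
  destruct (Rle_or_lt x (d i)) as [H|H].
  - exists (pt (gL i x) (nxt i)). rewrite Hz. split. apply step_L; auto.
    exists (nxt i). apply inA_pt. pose proof (gL_in i x). pose proof (Hd i). lra.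
  - exists (pt (gR i x) (nxt (nxt i))). rewrite Hz. split. apply step_R; auto; lra.
    exists (nxt (nxt i)). apply inA_pt. pose proof (gR_in i x). pose proof (Hd i). lra.
Qed.

Lemma step_inA0 z w : step rho d z w -> inA0 z /\ inA0 w.
Proof.
  intros H. split. destruct H as [j [_ [H _]]]; auto.
  destruct (step_img z w H) as [q [y [Hy Hw]]]. exists q. rewrite Hw. apply inA_pt. lra.
Qed.

Lemma back_unique z z' w : step rho d z w -> step rho d z' w -> z = z'.
Proof.
  intros H H'.
  destruct (step_char z w H) as [i [x [Hx [Hz C]]]].
  destruct (step_char z' w H') as [i' [x' [Hx' [Hz' C']]]].
  subst z z'. pose proof (Hd i) as Hdi. pose proof (Hd i') as Hdi'.
  destruct C as [[H1 H2]|[H1 H2]]; destruct C' as [[H1' H2']|[H1' H2']];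
  rewrite H2 in H2'.
  - assert (Hy : 0 < gL i x < 1) by (apply gL_in; lra).
    destruct (pt_inj _ _ _ _ Hy H2') as [E1 E2]. apply nxt_inj in E1. subst i'.
    destruct (gL_contr i x x' ltac:(lra) ltac:(lra)) as [c [Hc Ec]].
    assert (x = x'). { rewrite E2 in Ec. assert (Hm : c * (x - x') = 0) by lra.
      apply Rmult_integral in Hm. lra. } subst; auto.
  - assert (Hy : 0 < gL i x < 1) by (apply gL_in; lra).
    destruct (pt_inj _ _ _ _ Hy H2') as [E1 E2].
    assert (i' = nxt (nxt i)) by (rewrite <- (nxt3 i'), <- E1; destruct i; reflexivity). subst i'.
    destruct (gL_contr i x 0 ltac:(lra) ltac:(lra)) as [c [Hc Ec]].
    destruct (gR_contr (nxt (nxt i)) x' 1 ltac:(lra) ltac:(lra)) as [c' [Hc' Ec']].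
    rewrite <- gLR_corner in Ec'. rewrite <- E2 in Ec'.
    assert (c * x + c' * (1 - x') = 0) by lra.
    assert (0 <= c * x) by (apply Rmult_le_pos; lra).
    assert (0 <= c' * (1 - x')) by (apply Rmult_le_pos; lra).
    assert (M1 : c * x = 0) by lra. assert (M2 : c' * (1-x') = 0) by lra.
    apply Rmult_integral in M1. apply Rmult_integral in M2.
    assert (x = 0) by lra. assert (x' = 1) by lra. subst. apply pt_corner.
  - assert (Hy : 0 < gR i x < 1) by (apply gR_in; lra).
    destruct (pt_inj _ _ _ _ Hy H2') as [E1 E2].
    assert (i = nxt (nxt i')) by (rewrite <- (nxt3 i), E1; destruct i'; reflexivity). subst i.
    destruct (gL_contr i' x' 0 ltac:(lra) ltac:(lra)) as [c [Hc Ec]].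
    destruct (gR_contr (nxt (nxt i')) x 1 ltac:(lra) ltac:(lra)) as [c' [Hc' Ec']].
    rewrite <- gLR_corner in Ec'. rewrite E2 in Ec'.
    assert (c * x' + c' * (1 - x) = 0) by lra.
    assert (0 <= c * x') by (apply Rmult_le_pos; lra).
    assert (0 <= c' * (1 - x)) by (apply Rmult_le_pos; lra).
    assert (M1 : c * x' = 0) by lra. assert (M2 : c' * (1-x) = 0) by lra.
    apply Rmult_integral in M1. apply Rmult_integral in M2.
    assert (x' = 0) by lra. assert (x = 1) by lra. subst. symmetry. apply pt_corner.
  - assert (Hy : 0 < gR i x < 1) by (apply gR_in; lra).
    destruct (pt_inj _ _ _ _ Hy H2') as [E1 E2]. apply nxt_inj, nxt_inj in E1. subst i'.
    destruct (gR_contr i x x' ltac:(lra) ltac:(lra)) as [c [Hc Ec]].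
    assert (x = x'). { rewrite E2 in Ec. assert (Hm : c * (x - x') = 0) by lra.
      apply Rmult_integral in Hm. lra. } subst; auto.
Qed.


Fixpoint BK (n:nat) (z:vec) : Prop :=
  match n with O => z = dpt d I1 | S m => exists w, BK m w /\ step rho d z w end.

Lemma BK_unique n z z' : BK n z -> BK n z' -> z = z'.
Proof.
  revert z z'. induction n; simpl; intros z z' H H'. congruence.
  destruct H as [w [Hw Hs]], H' as [w' [Hw' Hs']].
  rewrite (IHn _ _ Hw Hw') in Hs. eapply back_unique; eauto.
Qed.

Definition c (n:nat) : vec := epsilon (inhabits (dpt d I1)) (BK n).
Lemma c_spec n z : BK n z -> BK n (c n).
Proof. intros H. unfold c. apply epsilon_spec. exists z; auto. Qed.
Lemma c_eq n z : BK n z -> z = c n.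
Proof. intros H. apply (BK_unique n); auto. eapply c_spec; eauto. Qed.

Definition Good n := exists z, BK n z.
Lemma Good_S n : Good (S n) -> Good n /\ step rho d (c (S n)) (c n).
Proof.
  intros [z Hz]. pose proof (c_spec _ _ Hz) as Hc. simpl in Hc.
  destruct Hc as [w [Hw Hs]]. rewrite (c_eq _ _ Hw) in Hs. split; auto. exists w; auto.
Qed.
Lemma Good_le n m : (m <= n)%nat -> Good n -> Good m.
Proof.
  intros Hle. induction Hle; auto. intros H. apply IHHle. apply Good_S; auto.
Qed.

Lemma c0 : c 0 = dpt d I1.
Proof. symmetry. apply c_eq. simpl. auto. Qed.

Lemma dpt_inA0 i : inA0 (dpt d i).
Proof. exists i. apply inA_pt. pose proof (Hd i). lra. Qed.

Definition succf z := epsilon (inhabits z) (fun w => step rho d z w /\ inA0 w).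
Lemma succf_spec z : inA0 z -> step rho d z (succf z) /\ inA0 (succf z).
Proof. intros H. unfold succf. apply epsilon_spec. apply succ_ex; auto. Qed.

Lemma iter_inA0 m z : inA0 z -> inA0 (Nat.iter m succf z).
Proof. induction m; simpl; auto. intros H. apply succf_spec; auto. Qed.

Lemma path_traj (k:nat) (f : nat -> vec) :
  (forall t, (t < k)%nat -> step rho d (f t) (f (S t))) -> inA0 (f k) ->
  exists zt, trajectory rho d zt /\ forall t, (t <= k)%nat -> zt t = f t.
Proof.
  intros Hf Hk.
  exists (fun t => if (t <=? k)%nat then f t else Nat.iter (t - k) succf (f k)).
  split.
  - intro t. destruct (Nat.leb_spec t k); destruct (Nat.leb_spec (S t) k).
    + apply Hf. lia.
    + assert (t = k) by lia. subst t. replace (S k - k)%nat with 1%nat by lia. simpl.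
      apply succf_spec; auto.
    + lia.
    + replace (S t - k)%nat with (S (t - k)) by lia. simpl.
      apply succf_spec. apply iter_inA0; auto.
  - intros t Ht. destruct (Nat.leb_spec t k); [auto|lia].
Qed.

Lemma Good_inA0 n : Good (S n) -> inA0 (c n).
Proof. intros H. apply (Good_S n) in H. destruct H as [_ H]. apply step_inA0 in H. tauto. Qed.

Lemma pre_chain n j : Good n -> (j < n)%nat -> preimage rho d (c n) (c j).
Proof.
  intros Hn Hj.
  destruct (path_traj (n - j) (fun t => c (n - t))) as [zt [Ht Hz]].
  - intros t Htj. replace (n - t)%nat with (S (n - S t)) by lia.
    apply Good_S. apply Good_le with n; auto; lia.
  - replace (n - (n - j))%nat with j by lia. apply Good_inA0. apply Good_le with n; auto; lia.
  - exists zt. split; auto. split.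
    + rewrite Hz by lia. f_equal. lia.
    + exists (n - j)%nat. split; [lia|]. rewrite Hz by lia. f_equal. lia.
Qed.

Lemma pre_BK z z' : preimage rho d z z' -> exists t, (1 <= t)%nat /\
  exists zt, trajectory rho d zt /\ zt O = z /\ zt t = z'.
Proof. intros [zt [H [H0 [t [Ht Hzt]]]]]. exists t. split; auto. exists zt; auto. Qed.

Lemma pre_BK1 z : preimage rho d z (dpt d I1) -> exists t, (1 <= t)%nat /\ BK t z.
Proof.
  intros [zt [H [H0 [t [Ht Hzt]]]]]. exists t. split; auto.
  assert (forall m, (m <= t)%nat -> BK m (zt (t - m)%nat)).
  { induction m; intros Hm. simpl. replace (t - 0)%nat with t by lia. auto.
    simpl. exists (zt (t - m)%nat). split. apply IHm; lia.
    replace (t - m)%nat with (S (t - S m)) by lia. apply H. }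
  rewrite <- H0. replace 0%nat with (t - t)%nat by lia. apply H1. lia.
Qed.


Hypothesis H1 : ~ finite_set (fun z => preimage rho d z (dpt d I1)).
Hypothesis H2 : finite_set (fun z => preimage rho d z (dpt d I2)).
Hypothesis H3 : finite_set (fun z => preimage rho d z (dpt d I3)).

Lemma all_good n : Good n.
Proof.
  apply NNPP. intros HN. apply H1. exists (map c (seq 0 n)).
  intros z Hz. destruct (pre_BK1 z Hz) as [t [Ht Hb]].
  destruct (le_lt_dec n t) as [Hnt|Hnt].
  - exfalso. apply HN. apply Good_le with t; auto. exists z; auto.
  - apply in_map_iff. exists t. split. symmetry. apply c_eq; auto. apply in_seq. lia.
Qed.

Lemma step_c n : step rho d (c (S n)) (c n).
Proof. apply Good_S. apply all_good. Qed.

Lemma c_inj n m : c n = c m -> n = m.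
Proof.
  assert (Hgen : forall n m, (n < m)%nat -> c n = c m -> False).
  { clear n m. intros n m Hnm E.
    assert (Hk : forall k, c (n + k) = c (m + k)).
    { induction k. rewrite !Nat.add_0_r; auto.
      apply (back_unique (c (n + S k)) (c (m + S k)) (c (n + k))).
      replace (n + S k)%nat with (S (n + k)) by lia. apply step_c.
      rewrite IHk. replace (m + S k)%nat with (S (m + k)) by lia. apply step_c. }
    assert (Ht : forall t, exists s, (s < m)%nat /\ c t = c s).
    { intro t. induction t as [t IH] using (well_founded_induction lt_wf).
      destruct (lt_dec t m). exists t; auto.
      replace t with (m + (t - m))%nat by lia. rewrite <- Hk.
      apply IH. lia. }
    apply H1. exists (map c (seq 0 m)). intros z Hz.
    destruct (pre_BK1 z Hz) as [t [_ Hb]]. rewrite (c_eq _ _ Hb).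
    destruct (Ht t) as [s [Hs E']]. rewrite E'. apply in_map_iff. exists s. split; auto.
    apply in_seq. lia. }
  intros E. destruct (lt_eq_lt_dec n m) as [[H|H]|H]; auto.
  exfalso; eapply Hgen; eauto. exfalso; eapply Hgen; eauto.
Qed.

Lemma c_not_d n i : i <> I1 -> c n <> dpt d i.
Proof.
  intros Hi E.
  assert (Hfin : finite_set (fun z => preimage rho d z (dpt d i))) by (destruct i; tauto).
  destruct Hfin as [l Hl].
  apply (inj_list (fun k => c (n + 1 + k)) l).
  - intros a b Hab. apply c_inj in Hab. lia.
  - intro k. apply Hl. rewrite <- E. apply pre_chain. apply all_good. lia.
Qed.

Definition edge_of (z:vec) : idx :=
  if Req_EM_T (z I1) 0 then I1 else if Req_EM_T (z I2) 0 then I2 else I3.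
Definition xof z := z (nxt (nxt (edge_of z))).

Lemma edge_of_pt p x : 0<x<1 -> edge_of (pt x p) = p /\ xof (pt x p) = x.
Proof.
  intros Hx. assert (edge_of (pt x p) = p).
  { destruct p; unfold edge_of, pt, evec; simpl;
    repeat (destruct Req_EM_T); auto; exfalso; lra. }
  split; auto. unfold xof. rewrite H. apply pt_nn.
Qed.

Definition E n := edge_of (c n).
Definition X n := xof (c n).

Lemma c_pt n : c n = pt (X n) (E n) /\ 0 < X n < 1.
Proof.
  destruct (step_img _ _ (step_c n)) as [q [y [Hy Hc]]].
  unfold X, E. rewrite Hc. destruct (edge_of_pt q y Hy) as [-> ->]. auto.
Qed.

Lemma c_nd n : (1 <= n)%nat -> X n <> d (E n).
Proof.
  intros Hn Hx. destruct (c_pt n) as [Hc _]. rewrite Hx in Hc.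
  destruct (E n) eqn:He.
  - assert (c n = c 0) by (rewrite c0; rewrite Hc; rewrite ?He; reflexivity). apply c_inj in H. lia.
  - apply (c_not_d n I2); [discriminate|]. rewrite Hc; rewrite ?He; reflexivity.
  - apply (c_not_d n I3); [discriminate|]. rewrite Hc; rewrite ?He; reflexivity.
Qed.

Lemma P1_c n : P1 rho d (c n).
Proof.
  destruct n. left. apply c0. right. rewrite <- c0. apply pre_chain. apply all_good. lia.
Qed.

Lemma P1_inv u : P1 rho d u -> exists n, u = c n.
Proof.
  intros [H|H]. exists 0%nat. rewrite c0; auto.
  destruct (pre_BK1 u H) as [t [_ Hb]]. exists t. apply c_eq; auto.
Qed.

Lemma fwdP1 z w p x : P1 rho d z -> z = pt x p -> 0 < x < 1 -> x <> d p ->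
  step rho d z w -> P1 rho d w.
Proof.
  intros HP Hz Hx Hxd Hs. destruct (P1_inv z HP) as [n Hn]. rewrite Hn in Hz, Hs. clear Hn HP.
  destruct n.
  - rewrite c0 in Hz. unfold dpt in Hz. symmetry in Hz. apply pt_inj in Hz; auto. destruct Hz; subst. tauto.
  - pose proof (step_c n) as Hs'. rewrite Hz in Hs', Hs.
    destruct (step_det _ _ p x eq_refl Hx Hs) as [A1 A2].
    destruct (step_det _ _ p x eq_refl Hx Hs') as [B1 B2].
    destruct (Rlt_or_le x (d p)).
    + rewrite (A1 H), <- (B1 H). apply P1_c.
    + assert (d p < x) by lra. rewrite (A2 H0), <- (B2 H0). apply P1_c.
Qed.


Definition Gap e x (s:bool) l := forall x', (if s then x < x' < x + l else x - l < x' < x) ->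
  ~ P1 rho d (pt x' e).

Lemma Gap_mono e x s l l' : l' <= l -> Gap e x s l -> Gap e x s l'.
Proof. intros Hl H x' Hx'. apply H. destruct s; lra. Qed.

Lemma gap_pull (e e': idx) (g : R -> R) (lo hi x y dl : R) s l :
  lo < x < hi -> y = g x ->
  (forall x', lo < x' < hi -> P1 rho d (pt x' e) -> P1 rho d (pt (g x') e')) ->
  (forall a b, lo<a<hi -> lo<b<hi -> exists c, 0<c<=1 /\ g a - g b = -c*(a-b)) ->
  Gap e' y s l -> 0 < l -> dl = (if negb s then hi - x else x - lo) ->
  Gap e x (negb s) (Rmin l dl).
Proof.
  intros Hx Hy Hf Hc HG Hl Hdl x' Hx' HP.
  pose proof (Rmin_l l dl). pose proof (Rmin_r l dl).
  destruct s; simpl in *; subst dl.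
  - assert (Hin : lo < x' < hi) by lra.
    destruct (Hc x' x Hin Hx) as [c [Hc1 Hc2]].
    assert (0 < c * (x - x')) by (apply Rmult_lt_0_compat; lra).
    assert (c * (x - x') <= x - x').
    { rewrite <- (Rmult_1_l (x - x')) at 2. apply Rmult_le_compat_r; lra. }
    apply (HG (g x')). subst y. lra. apply Hf; auto.
  - assert (Hin : lo < x' < hi) by lra.
    destruct (Hc x' x Hin Hx) as [c [Hc1 Hc2]].
    assert (0 < c * (x' - x)) by (apply Rmult_lt_0_compat; lra).
    assert (c * (x' - x) <= x' - x).
    { rewrite <- (Rmult_1_l (x' - x)) at 2. apply Rmult_le_compat_r; lra. }
    apply (HG (g x')). subst y. lra. apply Hf; auto.
Qed.

Definition bd p x (s:bool) :=
  if Rlt_dec x (d p) then (if s then d p - x else x - 0) else (if s then 1 - x else x - d p).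

Lemma gap_step n s l : 0 < l -> Gap (E n) (X n) s l ->
  Gap (E (S n)) (X (S n)) (negb s) (Rmin l (bd (E (S n)) (X (S n)) (negb s))).
Proof.
  intros Hl HG.
  destruct (c_pt (S n)) as [Hc Hx]. destruct (c_pt n) as [Hc' Hx'].
  pose proof (c_nd (S n) ltac:(lia)) as Hnd.
  set (p := E (S n)) in *. set (x := X (S n)) in *.
  pose proof (step_c n) as Hs. rewrite Hc in Hs.
  destruct (step_det _ _ p x eq_refl Hx Hs) as [A1 A2].
  pose proof (Hd p) as Hdp.
  unfold bd. destruct (Rlt_dec x (d p)) as [Hlt|Hge].
  - specialize (A1 Hlt). rewrite Hc' in A1.
    destruct (pt_inj _ _ _ _ Hx' A1) as [Ee Ex]. rewrite Ee, Ex in HG.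
    apply gap_pull with (g := gL p) (lo := 0) (hi := d p) (y := gL p x) (e' := nxt p); auto.
    + lra.
    + intros x' Hx'' HP. apply fwdP1 with (pt x' p) p x'; auto. lra. lra.
      apply step_L; lra.
    + intros a b Ha Hb. apply gL_contr; lra.
  - assert (Hgt : d p < x) by lra. specialize (A2 Hgt). rewrite Hc' in A2.
    destruct (pt_inj _ _ _ _ Hx' A2) as [Ee Ex]. rewrite Ee, Ex in HG.
    apply gap_pull with (g := gR p) (lo := d p) (hi := 1) (y := gR p x) (e' := nxt (nxt p)); auto.
    + lra.
    + intros x' Hx'' HP. apply fwdP1 with (pt x' p) p x'; auto. lra. lra.
      apply step_R; lra.
    + intros a b Ha Hb. apply gR_contr; lra.
Qed.


Definition Tk (e k : idx) : R := match k with I1 => 0 | I2 => d e | I3 => 1 end.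

Definition bQ (a : idx * bool * idx) (eta : R) : Prop :=
  let '(e, s, k) := a in
  forall x, P1 rho d (pt x e) -> (if s then x < Tk e k else Tk e k < x) ->
    Gap e x s (if s then Tk e k - x else x - Tk e k) -> eta <= (if s then Tk e k - x else x - Tk e k).

Lemma bQ_ex a : exists eta, 0 < eta /\ bQ a eta.
Proof.
  destruct a as [[e s] k]. simpl. set (T := Tk e k).
  destruct (classic (exists x, P1 rho d (pt x e) /\ (if s then x < T else T < x) /\
     Gap e x s (if s then T - x else x - T))) as [[x0 [P0 [C0 G0]]]|Hn].
  - exists (if s then T - x0 else x0 - T). split. destruct s; lra.
    intros x HP HC HG. destruct (Req_dec x x0) as [->|Hne]. lra.
    destruct s.
    + destruct (Rlt_or_le x x0).
      * exfalso. apply (HG x0); auto. lra.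
      * exfalso. apply (G0 x); auto. lra.
    + destruct (Rlt_or_le x x0).
      * exfalso. apply (G0 x); auto. lra.
      * exfalso. apply (HG x0); auto. lra.
  - exists 1. split; [lra|]. intros x HP HC HG. exfalso. apply Hn. exists x; auto.
Qed.

Definition allL : list (idx * bool * idx) :=
  list_prod (list_prod (I1 :: I2 :: I3 :: nil) (true :: false :: nil)) (I1 :: I2 :: I3 :: nil).

Lemma allL_in a : In a allL.
Proof.
  destruct a as [[e s] k]. unfold allL. apply in_prod; [apply in_prod|].
  destruct e; simpl; tauto. destruct s; simpl; tauto. destruct k; simpl; tauto.
Qed.

Lemma bQ_unif : exists eta, 0 < eta /\ forall a, bQ a eta.
Proof.
  destruct (combine allL bQ bQ_ex) as [eta [He Hq]].
  - intros [[e s] k] eta eta' Hq [Hp Hle] x HP HC HG. specialize (Hq x HP HC HG). lra.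
  - exists eta. split; auto. intro a. apply Hq. apply allL_in.
Qed.

Lemma gap_forever N s l : 0 < l -> Gap (E N) (X N) s l ->
  exists eta, 0 < eta /\ forall k, Gap (E (N+k)) (X (N+k)) (if Nat.even k then s else negb s) eta.
Proof.
  intros Hl HG. destruct bQ_unif as [es [Hes Hb]].
  exists (Rmin l es). split. apply Rmin_pos; auto.
  induction k.
  - rewrite Nat.add_0_r. simpl. apply Gap_mono with l; auto. apply Rmin_l.
  - assert (Hm : 0 < Rmin l es) by (apply Rmin_pos; auto).
    pose proof (gap_step (N + k) _ _ Hm IHk) as G.
    rewrite Nat.add_succ_r.
    replace (if Nat.even (S k) then s else negb s) with (negb (if Nat.even k then s else negb s))
      by (rewrite Nat.even_succ, <- Nat.negb_even; destruct (Nat.even k); simpl; auto; destruct s; auto).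
    set (sg := negb (if Nat.even k then s else negb s)) in *.
    set (m := Rmin l es) in *.
    set (p := E (S (N + k))) in *. set (x := X (S (N + k))) in *.
    destruct (Rle_or_lt m (bd p x sg)) as [Hle|Hlt].
    + rewrite Rmin_left in G; auto.
    + exfalso. rewrite Rmin_right in G by lra.
      destruct (c_pt (S (N+k))) as [Hc Hx]. fold p x in Hc, Hx.
      assert (HP : P1 rho d (pt x p)) by (rewrite <- Hc; apply P1_c).
      pose proof (Rmin_r l es) as Hm2. fold m in Hm2.
      pose proof (Hd p) as Hdp.
      unfold bd in G, Hlt. destruct (Rlt_dec x (d p)) as [Hxd|Hxd]; destruct sg.
      * specialize (Hb (p, true, I2) x HP). simpl in Hb. specialize (Hb Hxd G). lra.
      * specialize (Hb (p, false, I1) x HP). simpl in Hb. specialize (Hb ltac:(lra) G). lra.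
      * specialize (Hb (p, true, I3) x HP). simpl in Hb. specialize (Hb ltac:(lra) G). lra.
      * assert (Hnd := c_nd (S (N+k)) ltac:(lia)). fold p x in Hnd.
        specialize (Hb (p, false, I2) x HP). simpl in Hb. specialize (Hb ltac:(lra) G). lra.
Qed.


Definition code (e : idx) : nat := match e with I1 => 0 | I2 => 1 | I3 => 2 end.

Lemma bin_bounds (K : nat) x : (1 <= K)%nat -> 0 < x < 1 ->
  (1 <= Z.to_nat (up (x * INR K)) <= K)%nat.
Proof.
  intros HK Hx. destruct (archimed (x * INR K)) as [A1 A2].
  assert (HK' : 1 <= INR K) by (apply (le_INR 1); auto).
  assert (0 < x * INR K) by (apply Rmult_lt_0_compat; lra).
  assert (x * INR K < INR K) by (rewrite <- (Rmult_1_l (INR K)) at 2; apply Rmult_lt_compat_r; lra).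
  assert (Hu1 : (0 < up (x * INR K))%Z) by (apply lt_IZR; simpl; lra).
  assert (Hu2 : (up (x * INR K) < Z.of_nat K + 1)%Z).
  { apply lt_IZR. rewrite plus_IZR, <- INR_IZR_INZ. simpl. lra. }
  lia.
Qed.

Lemma bin_close (K : nat) x y : (1 <= K)%nat ->
  up (x * INR K) = up (y * INR K) -> (x - y) * INR K < 1 /\ (y - x) * INR K < 1.
Proof.
  intros HK E. destruct (archimed (x * INR K)) as [A1 A2]. destruct (archimed (y * INR K)) as [B1 B2].
  rewrite E in A1, A2. split; lra.
Qed.

Lemma no_gap N s l : 0 < l -> ~ Gap (E N) (X N) s l.
Proof.
  intros Hl HG. destruct (gap_forever N s l Hl HG) as [eta [He Hg]].
  set (K := Z.to_nat (up (/ eta))).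
  destruct (archimed (/ eta)) as [U1 U2].
  assert (Hup : (0 < up (/ eta))%Z) by (apply lt_IZR; simpl; pose proof (Rinv_0_lt_compat _ He); lra).
  assert (HKR : INR K = IZR (up (/ eta))) by (unfold K; rewrite INR_IZR_INZ, Z2Nat.id; auto; lia).
  assert (HK : (1 <= K)%nat) by (unfold K; lia).
  assert (HKe : 1 < eta * INR K).
  { rewrite HKR. apply Rmult_lt_reg_l with (/ eta). apply Rinv_0_lt_compat; auto.
    rewrite <- Rmult_assoc, Rinv_l, Rmult_1_l, Rmult_1_r by lra. lra. }
  set (pt_ j := (N + 2 * j)%nat).
  set (f := fun j => (code (E (pt_ j)) * K + (Z.to_nat (up (X (pt_ j) * INR K)) - 1))%nat).
  destruct (php (3 * K) f) as [i [j [Hij Hf]]].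
  - intros i _. unfold f. pose proof (bin_bounds K (X (pt_ i)) HK (proj2 (c_pt (pt_ i)))).
    destruct (E (pt_ i)); simpl; lia.
  - unfold f in Hf.
    pose proof (bin_bounds K (X (pt_ i)) HK (proj2 (c_pt (pt_ i)))).
    pose proof (bin_bounds K (X (pt_ j)) HK (proj2 (c_pt (pt_ j)))).
    assert (HE : E (pt_ i) = E (pt_ j) /\
       Z.to_nat (up (X (pt_ i) * INR K)) = Z.to_nat (up (X (pt_ j) * INR K))).
    { destruct (E (pt_ i)), (E (pt_ j)); simpl in Hf; split; try reflexivity; lia. }
    destruct HE as [HE HB].
    assert (HB' : up (X (pt_ i) * INR K) = up (X (pt_ j) * INR K)).
    { destruct (archimed (X (pt_ i) * INR K)). destruct (archimed (X (pt_ j) * INR K)).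
      pose proof (proj2 (c_pt (pt_ i))). pose proof (proj2 (c_pt (pt_ j))).
      assert (Z1 : 0 < IZR (up (X (pt_ i) * INR K))).
      { apply Rlt_trans with (X (pt_ i) * INR K); auto. apply Rmult_lt_0_compat. lra. apply lt_0_INR; lia. }
      assert (Z2 : 0 < IZR (up (X (pt_ j) * INR K))).
      { apply Rlt_trans with (X (pt_ j) * INR K); auto. apply Rmult_lt_0_compat. lra. apply lt_0_INR; lia. }
      apply lt_0_IZR in Z1. apply lt_0_IZR in Z2. lia. }
    destruct (bin_close K _ _ HK HB') as [C1 C2].
    assert (Hne : X (pt_ i) <> X (pt_ j)).
    { intro Ex. assert (Ecc : c (pt_ i) = c (pt_ j)).
      { rewrite (proj1 (c_pt (pt_ i))), (proj1 (c_pt (pt_ j))), HE, Ex. reflexivity. }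
      apply c_inj in Ecc. unfold pt_ in Ecc. lia. }
    assert (Gi := Hg (2 * i)%nat). assert (Gj := Hg (2 * j)%nat).
    replace (Nat.even (2 * i)) with true in Gi by (rewrite Nat.even_mul; reflexivity).
    replace (Nat.even (2 * j)) with true in Gj by (rewrite Nat.even_mul; reflexivity).
    fold (pt_ i) in Gi. fold (pt_ j) in Gj.
    rewrite HE in Gi.
    assert (Pi : P1 rho d (pt (X (pt_ i)) (E (pt_ j)))) by (rewrite <- HE, <- (proj1 (c_pt _)); apply P1_c).
    assert (Pj : P1 rho d (pt (X (pt_ j)) (E (pt_ j)))) by (rewrite <- (proj1 (c_pt _)); apply P1_c).
    assert (Hlt : forall a b, (b - a) * INR K < 1 -> a < b -> b - a < eta).
    { intros a b Ha Hb. apply Rmult_lt_reg_r with (INR K). apply lt_0_INR; lia. lra. }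
    destruct s; destruct (Rlt_or_le (X (pt_ i)) (X (pt_ j))) as [Q|Q].
    + apply (Gi (X (pt_ j))); auto. pose proof (Hlt _ _ C2 Q). lra.
    + apply (Gj (X (pt_ i))); auto. assert (Q' : X (pt_ j) < X (pt_ i)) by lra.
      pose proof (Hlt _ _ C1 Q'). lra.
    + apply (Gj (X (pt_ i))); auto. pose proof (Hlt _ _ C2 Q). lra.
    + apply (Gi (X (pt_ j))); auto. assert (Q' : X (pt_ j) < X (pt_ i)) by lra.
      pose proof (Hlt _ _ C1 Q'). lra.
Qed.


Lemma P1_pt_bounds x e : P1 rho d (pt x e) -> 0 < x < 1.
Proof.
  intros HP. destruct (P1_inv _ HP) as [n Hn]. destruct (c_pt n) as [Hc Hx].
  rewrite Hc in Hn. symmetry in Hn. destruct (pt_inj _ _ _ _ Hx Hn). subst. auto.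
Qed.

Lemma piA_pt i x : piA i (pt x i) = x.
Proof. unfold piA. apply pt_nn. Qed.

Lemma main_sec u : P1 rho d u -> R_limit rho d u /\ L_limit rho d u.
Proof.
  intros HP. destruct (P1_inv u HP) as [N ->].
  destruct (c_pt N) as [Hc Hx]. rewrite Hc.
  split.
  - destruct (seq_right (X N) (fun y => P1 rho d (pt y (E N)))) as [v [Hv1 [Hv2 Hv3]]].
    { intros l Hl. apply NNPP. intro Hn. apply (no_gap N true l Hl).
      intros x' Hx' HP'. apply Hn. exists x'; auto. }
    exists (E N). split. apply inA_pt; lra.
    exists (fun n => pt (v n) (E N)). split; [|split].
    + intro n. split; auto. apply inA_pt. pose proof (P1_pt_bounds _ _ (Hv1 n)). lra.
    + intro n. rewrite !piA_pt. auto.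
    + rewrite piA_pt. intros eps Heps. destruct (Hv3 eps Heps) as [M HM].
      exists M. intros n Hn. rewrite piA_pt. auto.
  - destruct (seq_right (- X N) (fun y => P1 rho d (pt (- y) (E N)))) as [v [Hv1 [Hv2 Hv3]]].
    { intros l Hl. apply NNPP. intro Hn. apply (no_gap N false l Hl).
      intros x' Hx' HP'. apply Hn. exists (- x'). rewrite Ropp_involutive. split; auto. lra. }
    exists (E N). split. apply inA_pt; lra.
    exists (fun n => pt (- v n) (E N)). split; [|split].
    + intro n. split; auto. apply inA_pt. pose proof (P1_pt_bounds _ _ (Hv1 n)). lra.
    + intro n. rewrite !piA_pt. specialize (Hv2 n). lra.
    + rewrite piA_pt. intros eps Heps. destruct (Hv3 eps Heps) as [M HM].
      exists M. intros n Hn. rewrite piA_pt. specialize (HM n Hn). unfold R_dist in *.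
      replace (- v n - X N) with (- (v n - - X N)) by ring. rewrite Rabs_Ropp. auto.
Qed.

End S.

Theorem lemma5p4 (rho d : idx -> R)
  (Hrho : forall i, 0 < rho i < 1)
  (Hsum : rho I1 + rho I2 + rho I3 > 1)
  (Hpair : forall i j, i <> j -> rho i + rho j <= 1)
  (Hd : forall i, 0 < d i < 1)
  (H1 : ~ finite_set (fun z => preimage rho d z (dpt d I1)))
  (H2 : finite_set (fun z => preimage rho d z (dpt d I2)))
  (H3 : finite_set (fun z => preimage rho d z (dpt d I3))) :
  forall u, P1 rho d u -> R_limit rho d u /\ L_limit rho d u.
Proof.
  intros u Hu. eapply main_sec; eauto.
Qed.
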